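(* Let $X$ be an abelian variety over a field $K$ of characteristic different from $2$, $G=\bar\rho_{2,X}(\mathrm{Gal}(K))\subset\mathrm{Aut}_{\mathbb F_2}(X_2)$, and assume $\dim X=2$, $G\cong\mathbb A_5$, $X_2$ is a simple $G$-module, and $\mathrm{End}_G(X_2)\cong\mathbb F_4$. Then $X_2$, viewed as a vector space over $\mathbb F_4=\mathrm{End}_G(X_2)$, is a very simple $G$-module over $\mathbb F_4$.
   Context: $X_2$ is the group of points of order dividing $2$ of $X$ over an algebraic closure of $K$, with Galois action $\bar\rho_{2,X}$. Definition: for a vector space $V$ over a field $k$ and a representation $\rho:G\to\mathrm{Aut}_k(V)$, the $G$-module $V$ is very simple if for every $k$-subalgebra $R\subset\mathrm{End}_k(V)$ containing $\mathrm{Id}_V$ with $\rho(\sigma)R\rho(\sigma)^{-1}\subset R$ for all $\sigma\in G$, either $R=k\cdot\mathrm{Id}_V$ or $R=\mathrm{End}_k(V)$. *)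

(* Defs.v *)
From mathcomp Require Import all_boot all_order all_algebra all_fingroup all_solvable all_character.
Set Implicit Arguments. Unset Strict Implicit. Unset Printing Implicit Defensive.
Import GRing.Theory.
Local Open Scope ring_scope.

(* Model: V = row vectors 'rV[F]_m (acting on the right: v |-> v *m A),
   End_F(V) = 'M[F]_m.  A "scalar algebra" E (a set of matrices) plays the
   role of the field of scalars k; k-linear endomorphisms are the matrices
   commuting with E. *)

Definition commutant {F : fieldType} {m : nat} (S : 'M[F]_m -> Prop) : 'M[F]_m -> Prop :=
  fun A => forall B, S B -> A *m B = B *m A.

(* With E = the scalar matrices F . 1 this is literally the paper's
   definition for k = F. *)
Definition mx_very_simple_over {F : fieldType} {m : nat}
    (E : 'M[F]_m -> Prop) (G : 'M[F]_m -> Prop) : Prop :=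
  forall R : 'M[F]_m -> Prop,
    (forall r, R r -> commutant E r) ->
    R 1%:M ->
    (forall a r, R r -> R (a *: r)) ->
    (forall e r, E e -> R r -> R (e *m r)) ->
    (forall r s, R r -> R s -> R (r + s)) ->
    (forall r s, R r -> R s -> R (r *m s)) ->
    (forall g r, G g -> R r -> R (g *m r *m invmx g)) ->
    (forall r, R r <-> E r) \/ (forall r, R r <-> commutant E r).

Definition GLcent {F : finFieldType} {n : nat} (G : {group {'GL_n[F]}}) : {set 'M[F]_n.-1.+1} :=
  [set A | [forall g in G, A *m GLval g == GLval g *m A]].

Definition GLmats {F : finFieldType} {n : nat} (G : {group {'GL_n[F]}}) : 'M[F]_n.-1.+1 -> Prop :=
  fun A => exists2 g, g \in G & A = GLval g.

(* Main.v *)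
Require Import Defs.
From mathcomp Require Import all_boot all_order all_algebra all_fingroup all_solvable all_character zify.
Import GRing.Theory.
Set Implicit Arguments. Unset Strict Implicit.
Local Open Scope ring_scope.
Lemma addF2s (a : 'F_2) : a + a = 0.
Proof. by case: a => [[|[|]]] //= ?; apply/val_inj. Qed.
Lemma addF2 (m n : nat) (x : 'M['F_2]_(m,n)) : x + x = 0.
Proof. by apply/matrixP=> i j; rewrite !mxE addF2s. Qed.
Lemma oppF2 (m n : nat) (x : 'M['F_2]_(m,n)) : - x = x.
Proof. by rewrite -[LHS]add0r -(addF2 x) -addrA subrr addr0. Qed.
Lemma F2_eq0 (m n : nat) (x y : 'M['F_2]_(m,n)) : x + y = 0 -> x = y.
Proof. by move=> h; rewrite -[x]addr0 -(addF2 y) addrA h add0r. Qed.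
Lemma F2_swap (m n : nat) (x y z w : 'M['F_2]_(m,n)) : x + y = z + w -> y + w = x + z.
Proof.
move=> h; apply: F2_eq0; rewrite addrC addrACA h addF2 //.
Qed.

Notation M := 'M['F_2]_4.

Definition Ecl (E : {set M}) := [/\ 1%:M \in E, {in E &, forall a b, a + b \in E},
  {in E &, forall a b, a *m b \in E}, {in E, forall a, invmx a \in E}
  & {in E, forall a, a != 0 -> a \in unitmx}].

Definition Cset (E : {set M}) := [set A : M | [forall e in E, A *m e == e *m A]].

Lemma cardC (E : {set M}) : Ecl E -> #|E| = 4%N -> (#|Cset E| <= 256)%N.
Proof.
case=> E1 Eadd Emul Einv Eunit E4.
have unit_cancel (v : 'rV['F_2]_4) e : e \in E -> e != 0 -> v *m e = 0 -> v = 0.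
  move=> Ee nz ve.
  by rewrite -[v]mulmx1 -(mulmxV (Eunit _ Ee nz)) mulmxA ve mul0mx.
have injE (v : 'rV['F_2]_4) : v != 0 -> {in E &, injective (fun e => v *m e)}.
  move=> nzv e e' Ee Ee' /= h.
  have h' : v *m (e + e') = 0 by rewrite mulmxDr h addF2.
  apply: F2_eq0; apply/eqP/negPn/negP => nz.
  by move: nzv; rewrite (unit_cancel _ _ (Eadd _ _ Ee Ee') nz h') eqxx.
pose v1 : 'rV['F_2]_4 := delta_mx 0 0.
have nz1 : v1 != 0.
  by apply/eqP => /matrixP/(_ 0 0); rewrite !mxE.
pose Ev1 := [set v1 *m e | e in E].
have cEv1 : #|Ev1| = 4%N by rewrite card_in_imset ?E4 //; apply: injE.
have : ~~ ([set: 'rV['F_2]_4] \subset Ev1).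
  by apply/negP => /subset_leq_card; rewrite cardsT card_mx card_Fp // cEv1.
move/subsetPn => [v2 _ v2n].
pose psi (p : M * M) := v1 *m p.1 + v2 *m p.2.
have psi_inj : {in setX E E &, injective psi}.
  move=> [a a'] [b b'] /setXP[Ea Ea'] /setXP[Eb Eb'] /= h.
  have h2 : v2 *m (a' + b') = v1 *m (a + b).
    by rewrite !mulmxDr; apply: F2_swap.
  case: (eqVneq (a' + b') 0) => [d0 | dnz].
    have eab' := F2_eq0 d0.
    move: h2; rewrite d0 mulmx0 => /esym; rewrite mulmxDr => /F2_eq0.
    by move/(injE _ nz1 _ _ Ea Eb) => ->; rewrite eab'.
  have Ed := Eadd _ _ Ea' Eb'.
  case/negP: v2n; apply/imsetP; exists ((a + b) *m invmx (a' + b')).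
    by apply: Emul; [apply: Eadd | apply: Einv].
  by rewrite mulmxA -h2 -mulmxA mulmxV ?mulmx1 // Eunit.
have psi_onto v : v \in psi @: setX E E.
  have -> : psi @: setX E E = [set: 'rV['F_2]_4] => //.
  apply/eqP; rewrite eqEcard subsetT cardsT card_in_imset // cardsX E4.
  by rewrite card_mx card_Fp.
have kerC D : D \in Cset E -> v1 *m D = 0 -> v2 *m D = 0 -> D = 0.
  rewrite inE => /forall_inP CD h1 h2; apply/row_matrixP => i; rewrite row0 rowE.
  case/imsetP: (psi_onto (delta_mx 0 i)) => [[a a']] /setXP[Ea Ea'] ->.
  rewrite /psi /= mulmxDl -!mulmxA -(eqP (CD _ Ea)) -(eqP (CD _ Ea')).
  by rewrite !mulmxA h1 h2 !mul0mx addr0.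
pose phi (A : M) := (v1 *m A, v2 *m A).
have phi_inj : {in Cset E &, injective phi}.
  move=> A B CA CB [hA hB]; apply/eqP; rewrite -subr_eq0; apply/eqP.
  apply: kerC; last 2 first.
  - by rewrite mulmxBr hA subrr.
  - by rewrite mulmxBr hB subrr.
  move: CA CB; rewrite !inE => /forall_inP CA /forall_inP CB.
  apply/forall_inP => e Ee.
  by rewrite mulmxBl mulmxBr (eqP (CA _ Ee)) (eqP (CB _ Ee)).
rewrite -(card_in_imset phi_inj); apply: leq_trans (max_card _) _.
by rewrite card_prod card_mx card_Fp.
Qed.
Lemma pow_idem (r : M) : exists2 m, (0 < m)%N & r ^+ (m + m) = r ^+ m.
Proof.
pose f (i : 'I_(#|{:M}|.+1)) := r ^+ i.
have : ~~ injectiveb f.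
  by apply/injectiveP => /leq_card; rewrite card_ord ltnn.
case/injectivePn => i [j nij fij].
have [a [b [ab hab]]] : exists a b, (a < b)%N /\ r ^+ a = r ^+ b.
  case: (ltngtP i j) => h; first by exists i, j.
    by exists j, i.
  by case/eqP: nij; apply: val_inj.
pose p := (b - a)%N.
have step k : r ^+ (a + k + p) = r ^+ (a + k).
  have -> : (a + k + p = b + k)%N by rewrite /p; lia.
  by rewrite !exprD hab.
have stepn t k : r ^+ (a + k + t * p) = r ^+ (a + k).
  elim: t => [|t IH]; first by rewrite mul0n addn0.
  have -> : (a + k + t.+1 * p = a + (k + t * p) + p)%N by rewrite mulSn; lia.
  by rewrite step addnA IH.
have pgt0 : (0 < p)%N by rewrite /p; lia.
exists ((a + 1) * p)%N; first by rewrite muln_gt0 addn1 pgt0.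
have hm : ((a + 1) * p = a + ((a + 1) * p - a))%N.
  have : (a + 1 <= (a + 1) * p)%N by rewrite leq_pmulr.
  lia.
by rewrite {1}hm stepn -hm.
Qed.

Lemma exists_unit (E : {set M}) (R : M -> Prop) :
  Ecl E -> #|E| = 4%N ->
  R 1%:M -> (forall r s, R r -> R s -> R (r + s)) ->
  (forall r s, R r -> R s -> R (r *m s)) ->
  (forall e, e \in E -> R e) ->
  (forall r, R r -> forall e, e \in E -> r *m e = e *m r) ->
  forall r, R r -> r \notin E -> exists u, [/\ R u, u \in unitmx & u \notin E].
Proof.
case=> E1 Eadd Emul Einv Eunit E4 R1 Radd Rmul RE RC r Rr rE.
have [m m0 hm] := pow_idem r.
set f := r ^+ m in hm.
have Rpow k : R (r ^+ k).
  elim: k => [|k IH]; first exact: R1.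
  by rewrite exprSr -mulmxE; apply: Rmul.
have Rf : R f by apply: Rpow.
have ff : f * f = f by rewrite /f -exprD.
case: (boolP (f \in E)) => fE.
  case: (eqVneq f 0) => f0.
    exists (1%:M + r); split.
    - by apply: Radd.
    - have := subrX1 r m; rewrite -/f f0 sub0r => h.
      have /mulmx1_unit[+ _] : (r - 1) *m (- \sum_(i < m) r ^+ i) = 1%:M.
        by rewrite mulmxE mulrN -h opprK.
      by rewrite oppF2 addrC.
    - apply/negP => h; case/negP: rE.
      have -> : r = (1%:M + r) + 1%:M by rewrite addrC addrA addF2 add0r.
      by apply: Eadd.
  have f1 : f = 1.
    have fu := Eunit _ fE f0.
    by rewrite -[f]mul1r -(mulVr fu) -mulrA ff mulVr.
  exists r; split => //.
  have /mulmx1_unit[+ _] : r *m r ^+ m.-1 = 1%:M.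
    by rewrite mulmxE -exprS prednK // -/f f1.
  by [].
have : ~~ (E \subset [set 0; 1%:M]).
  apply/negP => /subset_leq_card; rewrite E4 cards2.
  by case: (_ != _).
move/subsetPn => [e Ee]; rewrite !inE negb_or => /andP[e0 e1].
have Eq : 1%:M + e \in E by apply: Eadd.
have q0 : 1%:M + e != 0.
  apply/negP => /eqP/F2_eq0 h; by rewrite h eqxx in e1.
have Cf x : x \in E -> f * x = x * f by move=> xE; rewrite -!mulmxE RC.
set ie := invmx e; set iq := invmx (1%:M + e).
have eie : e * ie = 1 by rewrite -mulmxE mulmxV // Eunit.
have qiq : (1 + e) * iq = 1 by rewrite -mulmxE mulmxV // Eunit.
have fie : f * ie = ie * f by apply: Cf; apply: Einv.
have fiq : f * iq = iq * f by apply: Cf; apply: Einv.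
exists (f + e); split.
- by apply: Radd => //; apply: RE.
- have /mulmx1_unit[+ _] : (f + e) *m (ie * (1 - f) + iq * f) = 1%:M.
    rewrite mulmxE mulrDl !mulrDr !mulrA fie fiq -!(mulrA _ f) ff.
    rewrite !mulr1 !mulrN ff subrr add0r eie mul1r.
    rewrite addrCA -{1}(mul1r iq) -mulrDl -mulrDl qiq mul1r.
    by rewrite subrK.
  by [].
- apply/negP => h; case/negP: fE.
  have -> : f = (f + e) + e by rewrite -addrA addF2 addr0.
  by apply: Eadd.
Qed.

From Stdlib Require Import ClassicalEpsilon.
Definition pb (P : Prop) : bool := if excluded_middle_informative P then true else false.
Lemma pbP (P : Prop) : reflect P (pb P).
Proof. by rewrite /pb; case: excluded_middle_informative => h; constructor. Qed.

Lemma mkGL (u : M) : u \in unitmx -> exists x : {'GL_4['F_2]}, GLval x = u.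
Proof. by move=> hu; exists (Sub u hu). Qed.

Theorem corollary4p2 (G : {group {'GL_4['F_2]}}) :
  (G \isog 'Alt_('I_5))%g ->
  mx_irreducible (subg_repr (GLrepr 'F_2 3) (subsetT G)) ->
  #|GLcent G| = 4%N ->
  (forall A, A \in GLcent G -> A != 0 -> A \in unitmx) ->
  mx_very_simple_over (fun A => A \in GLcent G) (GLmats G).
Proof.
move=> isoG irrG card4 unitE R RC R1 RZ RE Radd Rmul RG.
set E := GLcent G in card4 unitE RC RE *.
have memE A : (A \in E) = [forall g in G, A *m GLval g == GLval g *m A].
  by rewrite inE.
clearbody E.
have EclE : Ecl E.
  split.
  - by rewrite memE; apply/forall_inP => g _; rewrite mul1mx mulmx1.
  - move=> a b; rewrite !memE => /forall_inP Ha /forall_inP Hb.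
    by apply/forall_inP => g Gg; rewrite mulmxDl mulmxDr (eqP (Ha _ Gg)) (eqP (Hb _ Gg)).
  - move=> a b; rewrite !memE => /forall_inP Ha /forall_inP Hb.
    apply/forall_inP => g Gg.
    by rewrite -mulmxA (eqP (Hb _ Gg)) !mulmxA (eqP (Ha _ Gg)).
  - move=> a; rewrite !memE => /forall_inP Ha; apply/forall_inP => g Gg.
    case: (boolP (a \in unitmx)) => au; last by rewrite invmx_out // Ha.
    apply/eqP; rewrite -[LHS]mulmx1 -(mulmxV au) !mulmxA -(mulmxA _ (GLval g)).
    by rewrite -(eqP (Ha _ Gg)) mulmxA mulVmx // mul1mx.
  - by move=> a Ea; apply: unitE.
have RE' e : e \in E -> R e by move=> Ee; rewrite -[e]mulmx1; apply: RE.
have RCE r e : R r -> e \in E -> r *m e = e *m r.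
  by move=> Rr Ee; apply: RC.
pose H := [set x : {'GL_4['F_2]} | pb (R (GLval x))].
have inH x : (x \in H) = pb (R (GLval x)) by rewrite inE.
have Hgrp : group_set H.
  apply/group_setP; split; first by rewrite inH; apply/pbP.
  move=> x y; rewrite !inH => /pbP Rx /pbP Ry; apply/pbP.
  by rewrite GL_MxE; apply: Rmul.
pose HG := Group Hgrp.
have nHG : (G \subset 'N(HG))%g.
  apply/subsetP => x Gx; rewrite inE; apply/subsetP => _ /imsetP[u Hu ->].
  rewrite inH; apply/pbP; rewrite /conjg !GL_MxE.
  move: Hu; rewrite inH => /pbP Ru.
  have := RG (GLval (x^-1)%g) (GLval u) _ Ru; rewrite GL_VxE invmxK mulmxA; apply.
  by exists (x^-1)%g; rewrite ?groupV ?GL_VxE.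
have simG : simple G by rewrite (isog_simple isoG) simple_Alt5 // card_ord.
have cardG : #|G| = 60%N.
  rewrite (card_isog isoG).
  have h5 : (1 < #|'I_5|)%N by rewrite card_ord.
  have := card_Alt h5; rewrite card_ord.
  move=> h; apply/eqP; rewrite -(eqn_pmul2l (isT : 0 < 2)%N) h //.
have nsN : ((G :&: HG)%G <| G)%g.
  by rewrite /normal subsetIl /= normsI ?normG.
case/simpleP: simG => _ /(_ _ nsN) [N1 | NG].
  left => r; split; last by apply: RE'.
  move=> Rr; apply/negPn/negP => rE; exfalso.
  have [u [Ru uU uE]] :=
    exists_unit EclE card4 R1 Radd Rmul RE' (fun r Rr e Ee => RCE r e Rr Ee) Rr rE.
  have [xu xuE] := mkGL uU.
  have GLinj : injective (@GLval 4 'F_2) := val_inj.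
  have [E1 Eadd Emul Einv Eunit] := EclE.
  have E0 : 0 \in E by rewrite -(addF2 1%:M); apply: Eadd.
  pose HE := [set x : {'GL_4['F_2]} | GLval x \in E].
  have HEgrp : group_set HE.
    apply/group_setP; split; first by rewrite inE.
    by move=> x y; rewrite !inE GL_MxE; apply: Emul.
  pose HEG := Group HEgrp.
  have cardHE : #|HEG| = 3%N.
    have -> : #|HEG| = #|[set GLval x | x in HEG]| by rewrite card_imset.
    have -> : [set GLval x | x in HEG] = E :\ 0.
      apply/setP => A; rewrite !inE; apply/imsetP/andP.
      - case=> x; rewrite inE => xE ->; split => //.
        by apply/eqP => h; move: (GL_det x); rewrite h det0 eqxx.
      - case=> nz EA; have [x xA] := mkGL (unitE _ EA nz).
        by exists x; rewrite ?inE xA.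
    by move: card4; rewrite (cardsD1 0) E0 => -[].
  have sHE : (HEG \subset HG)%g.
    by apply/subsetP => x; rewrite !inE => xE; apply/pbP; apply: RE'.
  have dvd3 : (3 %| #|HG|)%N by have := cardSg sHE; rewrite cardHE.
  have lt3 : (3 < #|HG|)%N.
    suff : (#|HEG| < #|HG|)%N by rewrite cardHE.
    apply: proper_card; rewrite properE sHE /=.
    apply/subsetPn; exists xu; first by rewrite inE xuE; apply/pbP.
    by rewrite inE xuE.
  have ge6 : (6 <= #|HG|)%N.
    case/dvdnP: dvd3 => k hk; rewrite hk in lt3 *.
    have : (1 * 3 < k * 3)%N by rewrite mul1n.
    rewrite ltn_pmul2r // => k1.
    by rewrite (_ : 6 = 2 * 3)%N // leq_pmul2r.
  pose UC := [set x : {'GL_4['F_2]} | GLval x \in Cset E].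
  have UCgrp : group_set UC.
    apply/group_setP; split.
      by rewrite !inE; apply/forall_inP => e _; rewrite mul1mx mulmx1.
    move=> x y; rewrite !inE GL_MxE => /forall_inP Cx /forall_inP Cy.
    apply/forall_inP => e Ee.
    by rewrite -mulmxA (eqP (Cy _ Ee)) !mulmxA (eqP (Cx _ Ee)).
  pose UCG := Group UCgrp.
  have sHU : (HG \subset UCG)%g.
    apply/subsetP => x; rewrite !inE => /pbP Rx.
    by apply/forall_inP => e Ee; rewrite RCE.
  have sGU : (G \subset UCG)%g.
    apply/subsetP => x Gx; rewrite !inE; apply/forall_inP => e Ee.
    by move: Ee; rewrite memE => /forall_inP/(_ _ Gx)/eqP ->.
  have cardU : (#|UCG| <= 256)%N.
    apply: leq_trans (cardC EclE card4).
    rewrite -(card_imset _ GLinj); apply: subset_leq_card.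
    by apply/subsetP => _ /imsetP[x Ux ->]; move: Ux; rewrite inE.
  have := mul_cardG HG G.
  have -> : (HG :&: G = 1)%g by rewrite setIC N1.
  rewrite cards1 muln1 cardG => h.
  have := subset_leq_card (mul_subG sHU sGU); rewrite -h => h2.
  have h3 : (6 * 60 <= #|HG| * 60)%N by rewrite leq_mul2r ge6 orbT.
  by have := leq_trans h3 (leq_trans h2 cardU).
right => r; split; first by apply: RC.
move=> Cr.
have sGH : (G \subset HG)%g by apply/setIidPl.
set rG := subg_repr (GLrepr 'F_2 3) (subsetT G).
have : (r \in 'C('C(enveloping_algebra_mx rG)))%MS.
  apply/cent_mxP => A; rewrite memmx_cent_envelop => /centgmxP cA.
  have EA : A \in E.
    by rewrite memE; apply/forall_inP => g Gg; apply/eqP; apply: cA.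
  by rewrite (Cr A EA).
move/submx_trans/(_ (mx_Jacobson_density irrG))/envelop_mxP => [a ->].
apply: (big_ind R).
- by rewrite -(scale0r 1%:M); apply: RZ.
- exact: Radd.
- move=> x Gx; apply: RZ.
  by move/subsetP: sGH => /(_ x Gx); rewrite inE => /pbP.
Qed.
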